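(* Let $N,l$ be positive integers with $l<N$, let $\hat a(\xi)=\cos^{2N}(\xi/2)\sum_{j=0}^{l}\binom{N-1+j}{j}\sin^{2j}(\xi/2)$ be the type II pseudo spline mask of order $(N,l)$, and let $\phi$ be the pseudo spline of type II, $\hat\phi(\xi)=\prod_{j=1}^\infty\hat a(2^{-j}\xi)$. Let $C_1=2^{-(2l+2)}\sum_{j=l+1}^{N+l}\binom{N+l}{j}$. Let $K\subset[-\pi,\pi]$ be nonempty and such that there is $\xi_0\in K$ with $|\xi_0|=\max_{\xi\in K}|\xi|$, and let $k_0$ be a positive integer such that $2^{-k}C_1|\xi|^{2l+2}<\tfrac12$ for all $\xi\in K$ and all $k>k_0$. Then for all $\xi\in\mathbb R$, $$|\hat\phi(\xi)|\ge C_4\,\chi_K(\xi),\qquad C_4=\prod_{k=1}^{k_0}|\hat a(2^{-k}\xi_0)|\,\exp\!\big(-C_1 2^{-k_0+1}|\xi_0|^{2l+2}\big).$$ *)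

(* Defs.v *)
From Stdlib Require Import Reals Lra Lia ClassicalEpsilon.
From Coquelicot Require Import Coquelicot.
Open Scope R_scope.

Definition ahat (N l : nat) (xi : R) : R :=
  (cos (xi / 2)) ^ (2 * N) *
  sum_f_R0 (fun j => Binomial.C (N - 1 + j) j * (sin (xi / 2)) ^ (2 * j)) l.

Fixpoint partial_prod (N l : nat) (n : nat) (xi : R) : R :=
  match n with
  | O => 1
  | S m => partial_prod N l m xi * ahat N l (xi / 2 ^ (S m))
  end.

Definition phihat (N l : nat) (xi : R) : R :=
  real (Lim_seq (fun n => partial_prod N l n xi)).

Definition pspC1 (N l : nat) : R :=
  / 2 ^ (2 * l + 2) * sum_f (l + 1) (N + l) (fun j => Binomial.C (N + l) j).

Definition chi (K : R -> Prop) (xi : R) : R :=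
  if excluded_middle_informative (K xi) then 1 else 0.

Definition pspC4 (N l k0 : nat) (xi0 : R) : R :=
  Rabs (partial_prod N l k0 xi0) *
  exp (- (pspC1 N l * (2 / 2 ^ k0) * Rabs xi0 ^ (2 * l + 2))).

(* Main.v *)
Require Import Defs.
From Stdlib Require Import Reals Lra Lia ClassicalEpsilon.
From Coquelicot Require Import Coquelicot.
Open Scope R_scope.

Definition cc (M j : nat) : R := Binomial.C (M + j) j.
Definition AA (M l : nat) (y : R) : R :=
  (1 - y) ^ (S M) * sum_f_R0 (fun j => cc M j * y ^ j) l.
Definition AD (M l : nat) (y : R) : R :=
  - (INR (S M + l) * cc M l * y ^ l * (1 - y) ^ M).

Lemma cc_step M l : cc M (S l) * INR (S l) = INR (S M + l) * cc M l.
Proof.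
  unfold cc, Binomial.C.
  replace (M + S l - S l)%nat with M by lia.
  replace (M + l - l)%nat with M by lia.
  replace (M + S l)%nat with (S (M + l)) by lia.
  replace (S M + l)%nat with (S (M + l)) by lia.
  change (Factorial.fact (S (M + l))) with (S (M+l) * Factorial.fact (M+l))%nat.
  change (Factorial.fact (S l)) with (S l * Factorial.fact l)%nat.
  rewrite !mult_INR.
  pose proof (INR_fact_neq_0 l). pose proof (INR_fact_neq_0 M).
  assert (INR (S l) <> 0) by (apply not_0_INR; lia).
  field; auto.
Qed.

Lemma cc_nonneg M j : 0 <= cc M j.
Proof.
  unfold cc, Binomial.C. apply Rlt_le. apply Rdiv_lt_0_compat.
  apply INR_fact_lt_0. apply Rmult_lt_0_compat; apply INR_fact_lt_0.
Qed.

Lemma AA_derive M l y : is_derive (AA M l) y (AD M l y).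
Proof.
  induction l as [|l IH].
  - unfold AA, AD. simpl sum_f_R0.
    apply is_derive_ext with (fun y => cc M 0 * (1 - y) ^ S M).
    { intros t. simpl. ring. }
    auto_derive; auto. rewrite Nat.add_0_r. replace (1 + - y) with (1 - y) by ring. destruct M; simpl; ring.
  - apply is_derive_ext with (fun y => AA M l y + cc M (S l) * (y ^ S l * (1 - y) ^ S M)).
    { intros t. unfold AA. simpl. ring. }
    replace (AD M (S l) y) with (AD M l y + cc M (S l) * (INR (S l) * y ^ l * (1-y)^(S M) + y ^ S l * (- INR (S M) * (1-y)^M))).
    2:{ unfold AD. rewrite Rmult_plus_distr_l.
        replace (cc M (S l) * (INR (S l) * y ^ l * (1 - y) ^ S M)) with
          (cc M (S l) * INR (S l) * y ^ l * (1 - y) ^ S M) by ring.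
        rewrite cc_step.
        replace (S M + S l)%nat with (S (S M + l)) by lia.
        rewrite (S_INR (S M + l)). rewrite <- cc_step.
        rewrite (plus_INR (S M) l). simpl pow. rewrite (S_INR l). ring. }
    assert (H2 : is_derive (fun t => cc M (S l) * (t ^ S l * (1 - t) ^ S M)) y (cc M (S l) * (INR (S l) * y ^ l * (1-y)^(S M) + y ^ S l * (- INR (S M) * (1-y)^M)))).
    { auto_derive; auto. replace (1 + - y) with (1 - y) by ring. rewrite !S_INR. destruct l; destruct M; simpl; ring. }
    exact (is_derive_plus _ _ _ _ _ IH H2).
Qed.

Lemma AA0 M l : AA M l 0 = 1.
Proof.
  unfold AA. rewrite Rminus_0_r, pow1, Rmult_1_l.
  induction l as [|l IH].
  - simpl. unfold cc. rewrite Nat.add_0_r, C_n_0. ring.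
  - simpl. rewrite IH. ring.
Qed.

Lemma AA_nonneg M l y : 0 <= y <= 1 -> 0 <= AA M l y.
Proof.
  intros [H1 H2]. unfold AA. apply Rmult_le_pos.
  - apply pow_le; lra.
  - induction l as [|l IH]; simpl.
    + apply Rmult_le_pos; [apply cc_nonneg| lra].
    + apply Rplus_le_le_0_compat; [exact IH|].
      apply Rmult_le_pos; [apply cc_nonneg| exact (pow_le y (S l) H1)].
Qed.

Lemma pow_le1 x n : 0 <= x <= 1 -> x ^ n <= 1.
Proof. intros H. rewrite <- (pow1 n). apply pow_incr. lra. Qed.

Lemma AA_decr M l y1 y2 : 0 <= y1 -> y1 <= y2 -> y2 <= 1 -> AA M l y2 <= AA M l y1.
Proof.
  intros H1 H2 H3. destruct (Req_dec y1 y2) as [->|Hne]; [lra|].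
  destruct (MVT_cor3 (AA M l) (AD M l) y1 y2) as [c [Hc1 [Hc2 Hc]]]; [lra| |].
  { intros x _ _. apply is_derive_Reals. apply AA_derive. }
  rewrite Hc. enough (AD M l c <= 0) by nra.
  unfold AD. apply Ropp_le_cancel. rewrite Ropp_involutive, Ropp_0.
  apply Rmult_le_pos; [apply Rmult_le_pos; [apply Rmult_le_pos|]|].
  - apply pos_INR.
  - apply cc_nonneg.
  - apply pow_le; lra.
  - apply pow_le; lra.
Qed.

Lemma AA_le1 M l y : 0 <= y <= 1 -> AA M l y <= 1.
Proof. intros H. rewrite <- (AA0 M l). apply AA_decr; lra. Qed.

Lemma AA_low M l y : 0 <= y <= 1 -> 1 - cc M (S l) * y ^ (S l) <= AA M l y.
Proof.
  intros [H1 H2].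
  set (g := fun t => AA M l t + cc M (S l) * t ^ S l).
  assert (Hd : forall t, is_derive g t (AD M l t + cc M (S l) * (INR (S l) * t ^ l))).
  { intros t.
    assert (H3 : is_derive (fun t => cc M (S l) * t ^ S l) t (cc M (S l) * (INR (S l) * t ^ l))).
    { auto_derive; auto. rewrite S_INR. destruct l; simpl; ring. }
    exact (is_derive_plus _ _ _ _ _ (AA_derive M l t) H3). }
  destruct (Req_dec y 0) as [->|Hne].
  { rewrite AA0. simpl. lra. }
  destruct (MVT_cor3 g (fun t => AD M l t + cc M (S l) * (INR (S l) * t ^ l)) 0 y) as [c [Hc1 [Hc2 Hc]]]; [lra| |].
  { intros x _ _. apply is_derive_Reals. apply Hd. }
  unfold g in Hc. rewrite AA0 in Hc.
  assert (0 <= AD M l c + cc M (S l) * (INR (S l) * c ^ l)).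
  { unfold AD. replace (cc M (S l) * (INR (S l) * c ^ l)) with (cc M (S l) * INR (S l) * c ^ l) by ring.
    rewrite cc_step.
    assert ((1 - c) ^ M <= 1) by (apply pow_le1; lra).
    assert (0 <= INR (S M + l) * cc M l * c ^ l).
    { apply Rmult_le_pos; [apply Rmult_le_pos|]; [apply pos_INR|apply cc_nonneg|apply pow_le; lra]. }
    nra. }
  simpl pow at 2 in Hc. nra.
Qed.

Lemma ahat_AA M l xi : ahat (S M) l xi = AA M l (sin (xi / 2) ^ 2).
Proof.
  unfold ahat, AA. rewrite pow_mult.
  replace (cos (xi / 2) ^ 2) with (1 - sin (xi / 2) ^ 2).
  2:{ pose proof (cos2 (xi/2)). unfold Rsqr in H. simpl. lra. }
  f_equal. apply sum_eq. intros i _. rewrite pow_mult.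
  unfold cc. replace (S M - 1 + i)%nat with (M + i)%nat by lia. reflexivity.
Qed.

Lemma sin2_abs x : sin x ^ 2 = sin (Rabs x) ^ 2.
Proof.
  destruct (Rle_dec 0 x).
  - rewrite Rabs_pos_eq; auto.
  - rewrite Rabs_left by lra. rewrite sin_neg. ring.
Qed.

Lemma sin2_bnd x : 0 <= sin x ^ 2 <= 1.
Proof. pose proof (SIN_bound x). split; nra. Qed.

Lemma sin2_mono a b : Rabs a <= Rabs b -> Rabs b <= PI ->
  sin (a / 2) ^ 2 <= sin (b / 2) ^ 2.
Proof.
  intros H1 H2. rewrite (sin2_abs (a/2)), (sin2_abs (b/2)).
  assert (Ha : Rabs (a/2) = Rabs a / 2) by (unfold Rdiv; rewrite Rabs_mult, (Rabs_pos_eq (/2)); lra).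
  assert (Hb : Rabs (b/2) = Rabs b / 2) by (unfold Rdiv; rewrite Rabs_mult, (Rabs_pos_eq (/2)); lra).
  rewrite Ha, Hb. pose proof (Rabs_pos a). pose proof PI_RGT_0.
  assert (sin (Rabs a / 2) <= sin (Rabs b / 2)) by (apply sin_incr_1; lra).
  assert (0 <= sin (Rabs a / 2)) by (apply sin_ge_0; lra).
  nra.
Qed.

Lemma sin2_le x : Rabs x <= PI -> sin (x / 2) ^ 2 <= (Rabs x / 2) ^ 2.
Proof.
  intros H. rewrite sin2_abs.
  assert (Ha : Rabs (x/2) = Rabs x / 2) by (unfold Rdiv; rewrite Rabs_mult, (Rabs_pos_eq (/2)); lra).
  rewrite Ha. pose proof (Rabs_pos x). pose proof PI_RGT_0.
  assert (0 <= sin (Rabs x / 2)) by (apply sin_ge_0; lra).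
  assert (sin (Rabs x / 2) <= Rabs x / 2).
  { destruct (Req_dec (Rabs x) 0) as [->|]. { replace (0/2) with 0 by field. rewrite sin_0; lra. }
    apply Rlt_le, sin_lt_x. lra. }
  nra.
Qed.

Lemma exp_le x y : x <= y -> exp x <= exp y.
Proof. intros [H|H]; [apply Rlt_le, exp_increasing; auto| rewrite H; lra]. Qed.

Lemma exp_bound x : 0 <= x <= /2 -> exp (-2 * x) <= 1 - x.
Proof.
  intros [H1 H2].
  pose proof (exp_ineq1_le x) as Hx.
  assert (HF : exp (2 * x) = exp x * exp x) by (rewrite <- exp_plus; f_equal; ring).
  assert (HEF : exp (-2 * x) * exp (2 * x) = 1) by (rewrite <- exp_plus, <- exp_0; f_equal; ring).
  pose proof (exp_pos (-2*x)). pose proof (exp_pos (2*x)).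
  assert (exp (2 * x) >= (1 + x) * (1 + x)) by (rewrite HF; nra).
  assert ((1 - x) * exp (2 * x) >= 1) by nra.
  nra.
Qed.

Lemma ahat_nonneg M l x : 0 <= ahat (S M) l x.
Proof. rewrite ahat_AA. apply AA_nonneg, sin2_bnd. Qed.

Lemma ahat_le1 M l x : ahat (S M) l x <= 1.
Proof. rewrite ahat_AA. apply AA_le1, sin2_bnd. Qed.

Lemma ahat_mono M l a b : Rabs a <= Rabs b -> Rabs b <= PI -> ahat (S M) l b <= ahat (S M) l a.
Proof.
  intros. rewrite !ahat_AA. apply AA_decr.
  - apply sin2_bnd.
  - apply sin2_mono; auto.
  - apply sin2_bnd.
Qed.

Lemma sum_first (g : nat -> R) n : (forall i, 0 <= g i) -> g 0%nat <= sum_f_R0 g n.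
Proof.
  intros Hg. induction n; simpl; [lra|]. specialize (Hg (S n)). lra.
Qed.

Lemma C_nonneg n k : 0 <= Binomial.C n k.
Proof.
  unfold Binomial.C. apply Rlt_le. apply Rdiv_lt_0_compat.
  apply INR_fact_lt_0. apply Rmult_lt_0_compat; apply INR_fact_lt_0.
Qed.

Lemma C1_nonneg N l : 0 <= pspC1 N l.
Proof.
  unfold pspC1, sum_f. apply Rmult_le_pos.
  - apply Rlt_le, Rinv_0_lt_compat, pow_lt; lra.
  - induction (N + l - (l + 1))%nat; simpl.
    + apply C_nonneg.
    + apply Rplus_le_le_0_compat; [assumption| apply C_nonneg].
Qed.

Lemma cc_le_C1 M l : cc M (S l) / 2 ^ (2 * l + 2) <= pspC1 (S M) l.
Proof.
  unfold pspC1, sum_f.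
  replace (cc M (S l)) with ((fun x => Binomial.C (S M + l) (x + (l + 1))) 0%nat).
  2:{ unfold cc. f_equal; lia. }
  rewrite Rmult_comm. apply Rmult_le_compat_r.
  - apply Rlt_le, Rinv_0_lt_compat, pow_lt; lra.
  - apply (sum_first (fun x : nat => Binomial.C (S M + l) (x + (l + 1)))). intros; apply C_nonneg.
Qed.

Lemma ahat_tail M l xi k : Rabs xi <= PI -> (1 <= k)%nat ->
  1 - / 2 ^ k * pspC1 (S M) l * Rabs xi ^ (2 * l + 2) <= ahat (S M) l (xi / 2 ^ k).
Proof.
  intros Hxi Hk.
  assert (Hp : 0 < 2 ^ k) by (apply pow_lt; lra).
  assert (Hz : Rabs (xi / 2 ^ k) = Rabs xi * / 2 ^ k).
  { unfold Rdiv. rewrite Rabs_mult, Rabs_inv, (Rabs_pos_eq (2^k)); lra. }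
  assert (Hzle : Rabs (xi / 2 ^ k) <= Rabs xi).
  { rewrite Hz. pose proof (Rabs_pos xi).
    assert (/ 2 ^ k <= 1).
    { rewrite <- Rinv_1. apply Rinv_le_contravar; [lra|]. apply pow_R1_Rle. lra. }
    nra. }
  rewrite ahat_AA.
  set (y := sin (xi / 2 ^ k / 2) ^ 2).
  assert (Hy : 0 <= y <= 1) by apply sin2_bnd.
  pose proof (AA_low M l y Hy) as Hlow.
  assert (Hyle : y <= (Rabs (xi / 2 ^ k) / 2) ^ 2) by (apply sin2_le; lra).
  assert (Hys : y ^ S l <= (Rabs xi / (2 ^ k * 2)) ^ (2 * l + 2)).
  { replace (2 * l + 2)%nat with (2 * S l)%nat by lia. rewrite pow_mult.
    apply pow_incr. split; [lra|]. rewrite Hz in Hyle.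
    replace (Rabs xi * / 2 ^ k / 2) with (Rabs xi / (2 ^ k * 2)) in Hyle by (field; lra). exact Hyle. }
  set (t := Rabs xi ^ (2 * l + 2)).
  assert (Ht : 0 <= t) by (apply pow_le, Rabs_pos).
  assert (Heq : (Rabs xi / (2 ^ k * 2)) ^ (2 * l + 2) = t / ((2 ^ k) ^ (2 * l + 2) * 2 ^ (2 * l + 2))).
  { unfold Rdiv. rewrite Rpow_mult_distr, pow_inv, Rpow_mult_distr. reflexivity. }
  rewrite Heq in Hys.
  assert (Hbig : 2 ^ k <= (2 ^ k) ^ (2 * l + 2)).
  { rewrite <- (pow_1 (2 ^ k)) at 1. apply Rle_pow; [apply pow_R1_Rle; lra| lia]. }
  assert (Hq : 0 < 2 ^ (2 * l + 2)) by (apply pow_lt; lra).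
  assert (Ht2 : t / ((2 ^ k) ^ (2 * l + 2) * 2 ^ (2 * l + 2)) <= t / (2 ^ k * 2 ^ (2 * l + 2))).
  { unfold Rdiv. apply Rmult_le_compat_l; auto. apply Rinv_le_contravar.
    - apply Rmult_lt_0_compat; auto.
    - apply Rmult_le_compat_r; lra. }
  pose proof (cc_le_C1 M l) as HC. pose proof (cc_nonneg M (S l)).
  assert (cc M (S l) * y ^ S l <= / 2 ^ k * pspC1 (S M) l * t).
  { apply Rle_trans with (cc M (S l) * (t / (2 ^ k * 2 ^ (2 * l + 2)))).
    - apply Rmult_le_compat_l; auto. lra.
    - replace (cc M (S l) * (t / (2 ^ k * 2 ^ (2 * l + 2)))) with
        (/ 2 ^ k * (cc M (S l) / 2 ^ (2 * l + 2)) * t) by (field; lra).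
      apply Rmult_le_compat_r; auto. apply Rmult_le_compat_l; auto.
      apply Rlt_le, Rinv_0_lt_compat; auto. }
  lra.
Qed.

Lemma pp_nonneg M l n x : 0 <= partial_prod (S M) l n x.
Proof.
  induction n; cbn [partial_prod]; [lra|]. apply Rmult_le_pos; auto. apply ahat_nonneg.
Qed.

Lemma pp_decr M l n x : partial_prod (S M) l (S n) x <= partial_prod (S M) l n x.
Proof.
  cbn [partial_prod]. pose proof (pp_nonneg M l n x). pose proof (ahat_le1 M l (x / 2 ^ S n)).
  pose proof (ahat_nonneg M l (x / 2 ^ S n)). nra.
Qed.

Lemma pp_le0 M l n x : partial_prod (S M) l n x <= partial_prod (S M) l 0 x.
Proof.
  induction n; [lra|]. eapply Rle_trans; [apply pp_decr|]. auto.
Qed.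

Lemma abs_div_le x k : Rabs (x / 2 ^ k) = Rabs x / 2 ^ k.
Proof.
  assert (0 < 2 ^ k) by (apply pow_lt; lra).
  unfold Rdiv. rewrite Rabs_mult, Rabs_inv, (Rabs_pos_eq (2^k)); lra.
Qed.

Lemma pp_mono M l n a b : Rabs a <= Rabs b -> Rabs b <= PI ->
  partial_prod (S M) l n b <= partial_prod (S M) l n a.
Proof.
  intros H1 H2. induction n; cbn [partial_prod]; [lra|].
  apply Rmult_le_compat; auto using pp_nonneg, ahat_nonneg.
  assert (0 < 2 ^ S n) by (apply pow_lt; lra).
  apply ahat_mono; rewrite !abs_div_le.
  - unfold Rdiv. apply Rmult_le_compat_r; auto. apply Rlt_le, Rinv_0_lt_compat; auto.
  - assert (Rabs b / 2 ^ S n <= Rabs b); [|lra].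
    assert (1 <= 2 ^ S n) by (apply pow_R1_Rle; lra).
    pose proof (Rabs_pos b).
    apply Rle_trans with (Rabs b / 1); [|lra].
    unfold Rdiv. apply Rmult_le_compat_l; auto. apply Rinv_le_contravar; lra.
Qed.

Theorem mainTheorem6 (N l : nat) (K : R -> Prop) (xi0 : R) (k0 : nat) :
  (0 < l)%nat -> (l < N)%nat ->
  (forall xi, K xi -> - PI <= xi <= PI) ->
  K xi0 ->
  (forall xi, K xi -> Rabs xi <= Rabs xi0) ->
  (0 < k0)%nat ->
  (forall xi k, K xi -> (k0 < k)%nat ->
     / 2 ^ k * pspC1 N l * Rabs xi ^ (2 * l + 2) < / 2) ->
  forall xi : R, Rabs (phihat N l xi) >= pspC4 N l k0 xi0 * chi K xi.
Proof.
  intros Hl HlN HK HK0 Hmax Hk0 Hsmall xi.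
  destruct N as [|M]; [lia|].
  unfold chi. destruct (excluded_middle_informative (K xi)) as [Kxi|Kxi].
  2:{ rewrite Rmult_0_r. apply Rle_ge, Rabs_pos. }
  rewrite Rmult_1_r.
  assert (Hxi0 : Rabs xi0 <= PI) by (apply Rabs_le; apply HK; auto).
  assert (Hxi : Rabs xi <= Rabs xi0) by auto.
  set (C1 := pspC1 (S M) l). pose proof (C1_nonneg (S M) l) as HC1. fold C1 in HC1.
  set (t := Rabs xi ^ (2 * l + 2)).
  assert (Ht : 0 <= t) by (apply pow_le, Rabs_pos).
  set (t0 := Rabs xi0 ^ (2 * l + 2)).
  assert (Htt0 : t <= t0) by (apply pow_incr; split; [apply Rabs_pos| auto]).
  assert (Htail : forall m, partial_prod (S M) l k0 xi * exp (-2 * C1 * t * (/ 2 ^ k0 - / 2 ^ (k0 + m)))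
                   <= partial_prod (S M) l (k0 + m) xi).
  { induction m.
    - rewrite Nat.add_0_r. replace (/ 2 ^ k0 - / 2 ^ k0) with 0 by ring.
      rewrite Rmult_0_r, exp_0. lra.
    - rewrite Nat.add_succ_r. cbn [partial_prod].
      set (n := (k0 + m)%nat) in *.
      set (x := / 2 ^ S n * C1 * t).
      assert (Hx0 : 0 <= x).
      { unfold x. apply Rmult_le_pos; auto. apply Rmult_le_pos; auto.
        apply Rlt_le, Rinv_0_lt_compat, pow_lt; lra. }
      assert (Hx1 : x < / 2). { unfold x, C1, t. apply Hsmall; [auto|]. unfold n. lia. }
      assert (Ha : exp (-2 * x) <= ahat (S M) l (xi / 2 ^ S n)).
      { apply Rle_trans with (1 - x); [apply exp_bound; lra|].
        apply ahat_tail; [lra| lia]. }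
      assert (Heq : exp (-2 * C1 * t * (/ 2 ^ k0 - / 2 ^ S n)) =
                    exp (-2 * C1 * t * (/ 2 ^ k0 - / 2 ^ n)) * exp (-2 * x)).
      { rewrite <- exp_plus. f_equal. unfold x.
        change (2 ^ S n) with (2 * 2 ^ n).
        assert (0 < 2 ^ n) by (apply pow_lt; lra). assert (0 < 2 ^ k0) by (apply pow_lt; lra). field. split; lra. }
      rewrite Heq, <- Rmult_assoc.
      apply Rmult_le_compat; auto.
      + apply Rmult_le_pos; [apply pp_nonneg| apply Rlt_le, exp_pos].
      + apply Rlt_le, exp_pos. }
  assert (Hlow : forall n, (k0 <= n)%nat -> pspC4 (S M) l k0 xi0 <= partial_prod (S M) l n xi).
  { intros n Hn. replace n with (k0 + (n - k0))%nat by lia.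
    eapply Rle_trans; [|apply Htail].
    unfold pspC4. fold C1. fold t0.
    rewrite Rabs_pos_eq by apply pp_nonneg.
    apply Rmult_le_compat.
    - apply pp_nonneg.
    - apply Rlt_le, exp_pos.
    - apply pp_mono; auto.
    - apply exp_le.
      assert (0 < 2 ^ k0) by (apply pow_lt; lra).
      assert (0 < 2 ^ (k0 + (n - k0))) by (apply pow_lt; lra).
      assert (0 <= C1 * t * / 2 ^ (k0 + (n - k0))).
      { apply Rmult_le_pos; [apply Rmult_le_pos; auto| apply Rlt_le, Rinv_0_lt_compat; auto]. }
      assert (C1 * t * / 2 ^ k0 <= C1 * t0 * / 2 ^ k0).
      { apply Rmult_le_compat_r; [apply Rlt_le, Rinv_0_lt_compat; auto|].
        apply Rmult_le_compat_l; auto. }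
      unfold Rdiv. nra. }
  assert (H1 : Rbar_le (Lim_seq (fun _ => pspC4 (S M) l k0 xi0)) (Lim_seq (fun n => partial_prod (S M) l n xi))).
  { apply Lim_seq_le_loc. exists k0. intros n Hn. apply Hlow; lia. }
  assert (H2 : Rbar_le (Lim_seq (fun n => partial_prod (S M) l n xi)) (Lim_seq (fun _ => partial_prod (S M) l 0 xi))).
  { apply Lim_seq_le_loc. exists 0%nat. intros n _. apply pp_le0. }
  rewrite Lim_seq_const in H1, H2.
  unfold phihat.
  destruct (Lim_seq (fun n => partial_prod (S M) l n xi)) as [r| |]; simpl in H1, H2 |- *; try contradiction.
  apply Rle_ge. eapply Rle_trans; [exact H1| apply Rle_abs].
Qed.
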